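(* Let $D$ be a knot diagram that is ascending from a base point $b$. If a $2$-sided face of $D$ does not admit a Reidemeister II move, or a $3$-sided face of $D$ does not admit a Reidemeister III move, then $b$ lies on the boundary of that face. Moreover, there are at most two such faces in $D$.
   Context: An oriented knot diagram is ascending from a point $b$ (not a crossing) if, travelling along the knot from $b$ in the direction of the orientation, every crossing is first met along its under-strand and later along its over-strand. A $2$-sided face admits a Reidemeister II move when one of its two edges is the over-strand at both of its crossings; a $3$-sided face admits a Reidemeister III move when one of its three edges is the over-strand at both of its crossings (equivalently, it is not the case that each edge has one over- and one under-crossing). *)

(* Defs.v *)
From mathcomp Require Import all_boot all_order.
Set Implicit Arguments. Unset Strict Implicit. Unset Printing Implicit Defensive.

(* A knot diagram with m = 2n "visits" (n crossings, each met twice).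
   Travelling along the knot, the visits are met in the order 0,1,...,m-1
   (cyclically); edge e (an arc of the diagram, e : 'I_m) runs from visit e
   to visit e+1 (mod m).
   - kd_pair i  : the other visit of the same crossing;
   - kd_over i  : the strand through visit i is the over-strand;
   - kd_sgn i   : which of the two possible cyclic orders the four half-edges
                  at the crossing have (the planar rotation system). *)
Record knot_diagram (m : nat) := KD {
  kd_pair : 'I_m -> 'I_m;
  kd_over : 'I_m -> bool;
  kd_sgn  : 'I_m -> bool
}.

Section KD.
Variables (m : nat) (D : knot_diagram m).

(* half-edges: (e, false) = tail half of edge e (at visit e),
               (e, true)  = head half of edge e (at visit e+1). *)
Definition dart := ('I_m * bool)%type.

Definition dart_visit (h : dart) : 'I_m :=
  if h.2 then ordS h.1 else h.1.

Definition in_half (i : 'I_m) : dart := (ord_pred i, true).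
Definition out_half (i : 'I_m) : dart := (i, false).

Definition dart_flip (h : dart) : dart := (h.1, ~~ h.2).

(* rotation sigma around a crossing with visits i and j = pair i:
   if sgn i : in_i -> in_j -> out_i -> out_j -> in_i
   else      : in_i -> out_j -> out_i -> in_j -> in_i   *)
Definition dart_rot (h : dart) : dart :=
  let i := dart_visit h in
  let j := kd_pair D i in
  if h.2 then (if kd_sgn D i then in_half j else out_half j)
  else (if kd_sgn D i then out_half j else in_half j).

(* face permutation phi = sigma o alpha; faces = orbits of phi *)
Definition face_perm (h : dart) : dart := dart_rot (dart_flip h).

(* well-formedness: a genuine knot diagram on the sphere
   (Euler: V - E + F = n - 2n + F = 2, i.e. F = n + 2). *)
Definition kd_wf : Prop :=
  0 < m /\
  [/\ (forall i, kd_pair D (kd_pair D i) = i),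
      (forall i, kd_pair D i != i),
      (forall i, kd_over D (kd_pair D i) = ~~ kd_over D i),
      (forall i, kd_sgn D (kd_pair D i) = ~~ kd_sgn D i)
    & fcard face_perm predT = m./2 + 2].

(* position of visit i when travelling from a base point on edge k *)
Definition pos (k i : 'I_m) : nat := (i + m - k.+1) %% m.

(* ascending from base point b lying on edge k (b is not a crossing):
   at every crossing the visit met first is along the under-strand *)
Definition ascending (k : 'I_m) : Prop :=
  forall i : 'I_m, pos k i < pos k (kd_pair D i) -> kd_over D i = false.

Definition face_sides (h : dart) : nat := order face_perm h.

Definition face_of (h : dart) : {set dart} := [set x | fconnect face_perm h x].

Definition edge_over_both (e : 'I_m) : bool := kd_over D e && kd_over D (ordS e).

Definition face_has_over_edge (h : dart) : bool :=
  [exists x : dart, fconnect face_perm h x && edge_over_both x.1].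

Definition admits_R2 (h : dart) : bool := (face_sides h == 2) && face_has_over_edge h.
Definition admits_R3 (h : dart) : bool := (face_sides h == 3) && face_has_over_edge h.

Definition bad_face (h : dart) : bool :=
  ((face_sides h == 2) && ~~ admits_R2 h) || ((face_sides h == 3) && ~~ admits_R3 h).

Definition on_face_boundary (h : dart) (k : 'I_m) : Prop :=
  exists b : bool, fconnect face_perm h (k, b).

End KD.

(* Main.v *)
Require Import Defs.
From mathcomp Require Import all_boot all_order.
From mathcomp Require Import zify.
Set Implicit Arguments. Unset Strict Implicit. Unset Printing Implicit Defensive.

Lemma visit_in m (j : 'I_m) : dart_visit (in_half j) = j.
Proof. by rewrite /dart_visit /in_half /= ord_predK. Qed.

Lemma visit_out m (j : 'I_m) : dart_visit (out_half j) = j.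
Proof. by []. Qed.

Lemma visit_rot m (D : knot_diagram m) h :
  dart_visit (dart_rot D h) = kd_pair D (dart_visit h).
Proof.
rewrite /dart_rot; case: h.2; case: kd_sgn; by rewrite ?visit_in ?visit_out.
Qed.

Lemma rot2 m (D : knot_diagram m) h :
  (dart_rot D h).2 = if h.2 then kd_sgn D (dart_visit h) else ~~ kd_sgn D (dart_visit h).
Proof. rewrite /dart_rot; by case: h.2; case: kd_sgn. Qed.

Lemma dart_eq m (h1 h2 : dart m) :
  dart_visit h1 = dart_visit h2 -> h1.2 = h2.2 -> h1 = h2.
Proof.
case: h1 => e1 s1; case: h2 => e2 s2 /= Ev E; subst s2; move: Ev.
rewrite /dart_visit /=; by case: s1 => [/ordS_inj -> | ->].
Qed.

Lemma face_perm_inj m (D : knot_diagram m) : kd_wf D -> injective (face_perm D).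
Proof.
move=> [_ [pairK _ _ _ _]] h1 h2 E.
have Ev : dart_visit (dart_flip h1) = dart_visit (dart_flip h2).
  have := congr1 (@dart_visit m) E; rewrite /face_perm !visit_rot => E'.
  by rewrite -(pairK (dart_visit (dart_flip h1))) E' pairK.
have E2 := congr1 snd E; rewrite /face_perm !rot2 Ev in E2.
have : dart_flip h1 = dart_flip h2.
  apply: dart_eq => //; move: E2; case: (dart_flip h1).2; case: (dart_flip h2).2;
  by case: kd_sgn.
by case: h1 {E Ev E2} => e1 s1; case: h2 => e2 s2 [-> /(inv_inj negbK) ->].
Qed.

Lemma pos_val m (k i : 'I_m) :
  pos k i = if k < i then i - k.+1 else i + m - k.+1.
Proof.
have Hi := ltn_ord i; have Hk := ltn_ord k.
rewrite /pos; case: ifP => H.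
  have -> : i + m - k.+1 = (i - k.+1) + m by lia.
  rewrite modnDr modn_small //; lia.
rewrite modn_small //; lia.
Qed.

Lemma pos_inj m (k i j : 'I_m) : pos k i = pos k j -> i = j.
Proof.
have Hi := ltn_ord i; have Hj := ltn_ord j; have Hk := ltn_ord k.
rewrite !pos_val => E; apply: val_inj => /=.
move: E; case: ifP; case: ifP; lia.
Qed.

Lemma ordS_val m (e : 'I_m) : val (ordS e) = if e.+1 < m then e.+1 else 0.
Proof.
have He := ltn_ord e; rewrite /=; case: ifP => H.
  by rewrite modn_small.
have -> : e.+1 = m by lia.
by rewrite modnn.
Qed.

Lemma pos_S m (k e : 'I_m) : nat_of_ord e <> nat_of_ord k -> pos k (ordS e) = (pos k e).+1.
Proof.
have He := ltn_ord e; have Hk := ltn_ord k => Hne.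
rewrite !pos_val ordS_val; case H0: (e.+1 < m).
all: rewrite ?ltn0; repeat case: ifP => ?; lia.
Qed.

Lemma asc_lt m (D : knot_diagram m) k : kd_wf D -> ascending D k ->
  forall i, kd_over D i = false -> pos k i < pos k (kd_pair D i).
Proof.
move=> [_ [pK pN pO _ _]] asc i Oi.
case: (ltngtP (pos k i) (pos k (kd_pair D i))) => // H.
  have := asc (kd_pair D i); rewrite pK => /(_ H); by rewrite pO Oi.
by have := pN i; rewrite -(pos_inj H) eqxx.
Qed.

Lemma asc_gt m (D : knot_diagram m) k : kd_wf D -> ascending D k ->
  forall i, kd_over D i = true -> pos k (kd_pair D i) < pos k i.
Proof.
move=> [_ [pK pN pO _ _]] asc i Oi.
case: (ltngtP (pos k i) (pos k (kd_pair D i))) => // H.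
  by have := asc i H; rewrite Oi.
by have := pN i; rewrite -(pos_inj H) eqxx.
Qed.

Lemma step m (D : knot_diagram m) k : kd_wf D -> ascending D k ->
  forall x : dart m, nat_of_ord x.1 <> nat_of_ord k ->
  (if kd_over D (dart_visit (face_perm D x))
   then pos k (dart_visit x) <= pos k (dart_visit (face_perm D x))
   else pos k (dart_visit (face_perm D x)) <= pos k (dart_visit x)) /\
  (pos k (dart_visit (face_perm D x)) = pos k (dart_visit x) ->
   x.2 = kd_over D (dart_visit (face_perm D x)) /\
   dart_visit (face_perm D x) = dart_visit x).
Proof.
move=> wf asc x Hx; set y := face_perm D x; set P := fun z => pos k (dart_visit z).
rewrite -/(P x) -/(P y).
have wf' := wf; move: wf' => [_ [pK pN pO _ _]].
have Vy : dart_visit y = kd_pair D (dart_visit (dart_flip x)) by rewrite /y /face_perm visit_rot.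
rewrite /P Vy pO.
move: Hx; case: x {y Vy P} => e s /= He.
have HS := pos_S He.
case: s; rewrite /dart_visit /=; case Ob: (kd_over D _) => /=.
- move: (asc_gt wf asc Ob) => H; split; first lia.
  move=> E; exfalso; lia.
- move: (asc_lt wf asc Ob) => H; split; first lia.
  move=> E; split=> //; exact: (pos_inj E).
- move: (asc_gt wf asc Ob) => H; split; first lia.
  move=> E; split=> //; exact: (pos_inj E).
- move: (asc_lt wf asc Ob) => H; split; first lia.
  move=> E; exfalso; lia.
Qed.

Lemma notOO m (D : knot_diagram m) : kd_wf D -> forall x : dart m,
  ~~ edge_over_both D x.1 -> kd_over D (dart_visit x) ->
  kd_over D (dart_visit (face_perm D x)).
Proof.
move=> [_ [pK pN pO _ _]] [e s]; rewrite /face_perm visit_rot pO /edge_over_both /dart_visit /=.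
by case: s => /=; case: (kd_over D e); case: (kd_over D (ordS e)).
Qed.

Lemma part1 m (D : knot_diagram m) (k : 'I_m) :
  kd_wf D -> ascending D k ->
  forall h : dart m, bad_face D h -> on_face_boundary D h k.
Proof.
move=> wf asc h Hb.
have inj := face_perm_inj wf.
have [Hs H] : ((face_sides D h == 2) || (face_sides D h == 3)) /\ ~~ face_has_over_edge D h.
  move: Hb; rewrite /bad_face /admits_R2 /admits_R3.
  by case: (face_sides D h == 2); case: (face_sides D h == 3); case: face_has_over_edge.
rewrite /on_face_boundary.
case Fb: (fconnect (face_perm D) h (k, false)); first by exists false.
case Ft: (fconnect (face_perm D) h (k, true)); first by exists true.
exfalso.
have NK : forall x, fconnect (face_perm D) h x -> nat_of_ord x.1 <> nat_of_ord k.
  move=> [e s] /= Hx Ek; have Eek : e = k by apply: val_inj.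
  by subst e; move: Hx; case: s; rewrite ?Fb ?Ft.
have NO : forall x, fconnect (face_perm D) h x -> ~~ edge_over_both D x.1.
  move=> x Hx; apply: contra H => Ho; apply/existsP; exists x; by rewrite Hx Ho.
have C0 := fconnect_iter (face_perm D) 0 h.
have C1 := fconnect_iter (face_perm D) 1 h.
have C2 := fconnect_iter (face_perm D) 2 h.
have C3 := fconnect_iter (face_perm D) 3 h.
have S0 := step wf asc (NK _ C0).
have S1 := step wf asc (NK _ C1).
have S2 := step wf asc (NK _ C2).
have O0 := notOO wf (NO _ C0).
have O1 := notOO wf (NO _ C1).
have O2 := notOO wf (NO _ C2).
have cyc := iter_order inj h.
have U := orbit_uniq (face_perm D) h.
rewrite /orbit in U.
rewrite /face_sides in Hs.
simpl in *.
case/orP: Hs => /eqP Hn; rewrite Hn /= in cyc U.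
- rewrite cyc in S1 O1.
  have Eo : kd_over D (dart_visit (face_perm D h)) = kd_over D (dart_visit h).
    by apply/idP/idP.
  have E : h = face_perm D h.
    move: S0 S1; rewrite Eo; case: (kd_over D (dart_visit h)) => -[A0 B0] [A1 B1].
    + have Ep : pos k (dart_visit (face_perm D h)) = pos k (dart_visit h) by clear -A0 A1; lia.
      case: (B0 Ep) => e0 v0; case: (B1 (esym Ep)) => e1 _.
      by apply: dart_eq; rewrite ?v0 ?e0 ?e1.
    + have Ep : pos k (dart_visit (face_perm D h)) = pos k (dart_visit h) by clear -A0 A1; lia.
      case: (B0 Ep) => e0 v0; case: (B1 (esym Ep)) => e1 _.
      by apply: dart_eq; rewrite ?v0 ?e0 ?e1.
  by move: U; rewrite mem_seq1 andbT -E eqxx.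
- rewrite cyc in S2 O2.
  have Eo1 : kd_over D (dart_visit (face_perm D h)) = kd_over D (dart_visit h).
    by apply/idP/idP => [/O1 /O2|/O0].
  have Eo2 : kd_over D (dart_visit (face_perm D (face_perm D h))) = kd_over D (dart_visit h).
    by apply/idP/idP => [/O2|/O0 /O1].
  have E : h = face_perm D h.
    move: S0 S1 S2; rewrite Eo1 Eo2; case: (kd_over D (dart_visit h)) => -[A0 B0] [A1 B1] [A2 B2].
    + have Ep : pos k (dart_visit (face_perm D h)) = pos k (dart_visit h) by clear -A0 A1 A2; lia.
      have Ep2 : pos k (dart_visit (face_perm D (face_perm D h))) = pos k (dart_visit (face_perm D h)) by clear -A0 A1 A2; lia.
      case: (B0 Ep) => e0 v0; case: (B1 Ep2) => e1 _.
      by apply: dart_eq; rewrite ?v0 ?e0 ?e1.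
    + have Ep : pos k (dart_visit (face_perm D h)) = pos k (dart_visit h) by clear -A0 A1 A2; lia.
      have Ep2 : pos k (dart_visit (face_perm D (face_perm D h))) = pos k (dart_visit (face_perm D h)) by clear -A0 A1 A2; lia.
      case: (B0 Ep) => e0 v0; case: (B1 Ep2) => e1 _.
      by apply: dart_eq; rewrite ?v0 ?e0 ?e1.
  by move: U; rewrite inE negb_or -E eqxx.
Qed.

Theorem lemma5p6 (m : nat) (D : knot_diagram m) (k : 'I_m) :
  kd_wf D -> ascending D k ->
  (forall h : dart m, bad_face D h -> on_face_boundary D h k) /\
  #|[set face_of D h | h in [pred h | bad_face D h]]| <= 2.
Proof.
move=> wf asc; split; first exact: part1.
have inj := face_perm_inj wf.
apply: (@leq_trans #|[set face_of D (k, false); face_of D (k, true)]|).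
  apply: subset_leq_card; apply/subsetP => F /imsetP [h Hh ->].
  rewrite inE in Hh.
  have [b Hbk] := part1 wf asc Hh.
  have Eq : face_of D h = face_of D (k, b).
    apply/setP => x; rewrite !inE; apply/idP/idP => Hx.
      by apply: connect_trans Hx; rewrite fconnect_sym.
    exact: connect_trans Hbk Hx.
  by rewrite Eq !inE; case: b {Hbk Eq}; rewrite eqxx ?orbT.
by rewrite cards2; case: (_ != _).
Qed.
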